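(* Let $\mathcal{X}$ be a convex subset of a normed space with norm $\|\cdot\|$ and dual norm $\|\cdot\|_*$, and $F:\mathcal{X}\times\mathcal{X}\to\mathbb{R}$ differentiable in its second argument such that for all $x,y,z\in\mathcal{X}$: $F(z,x)\ge F(z,y)+\langle\nabla_2F(z,y),x-y\rangle+\frac{\alpha}{2}\|x-y\|^2$; $|F(z,x)-F(z,y)|\le G_2\|x-y\|$; and $\|\nabla_2F(x,z)-\nabla_2F(y,z)\|_*\le\beta\|x-y\|$, where $\alpha>0$. Let $x_1\in\mathcal{X}$ and $x_{n+1}=\arg\min_{x\in\mathcal{X}}\sum_{k=1}^nF(x_k,x)$ for $n\ge1$. Let $\theta=\beta/\alpha$ and, for $n\ge2$, $S_n=\frac{1}{n-1}\sum_{k=1}^{n-1}\|x_n-x_k\|$. Then for all $n\ge2$, $\|x_{n+1}-x_n\|\le\frac{\theta S_n}{n}$.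
   Context: The iteration is the value aggregation algorithm AggreVaTe (Follow-the-Leader on the per-round costs $x\mapsto F(x_k,x)$); minimizers are assumed to exist. *)

(* Defs.v *)
From HB Require Import structures.
From mathcomp Require Import all_boot all_order all_algebra.
From mathcomp Require Import all_classical all_reals all_analysis.
Set Implicit Arguments. Unset Strict Implicit. Unset Printing Implicit Defensive.
Import Order.TTheory GRing.Theory Num.Theory.
Local Open Scope classical_set_scope.
Local Open Scope ring_scope.

Definition dual_norm (R : realType) (V : normedModType R) (L : V -> R) : R :=
  sup [set `|L v| | v in [set v : V | `|v| <= 1]].

(* Main.v *)
Require Import Defs.
From HB Require Import structures.
From mathcomp Require Import all_boot all_order all_algebra.
From mathcomp Require Import all_classical all_reals all_analysis.
From mathcomp Require Import ring lra.
Import Order.TTheory GRing.Theory Num.Theory.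
Local Open Scope classical_set_scope.
Local Open Scope ring_scope.
Lemma opt_sum (R : realType) (V : normedModType R) (r : seq nat)
  (f : nat -> V -> R) (xs y : V) :
  (forall k, k \in r -> differentiable (f k) xs) ->
  (forall t : R, 0 < t -> t <= 1 ->
     \sum_(k <- r) f k xs <= \sum_(k <- r) f k (xs + t *: (y - xs))) ->
  0 <= \sum_(k <- r) 'd (f k) xs (y - xs).
Proof.
move=> df hmin.
set h := y - xs.
pose g k (t : R) := t^-1 *: ((f k \o shift xs) (t *: h) - f k xs).
have cg : (fun t => \sum_(k <- r | k \in r) g k t) @ 0^' -->
          \sum_(k <- r | k \in r) 'd (f k) xs h.
  apply: cvg_big => //; first exact: add_continuous.
  move=> k kr; rewrite -deriveE; last exact: df.
  exact: diff_derivable (df k kr).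
have cg' := cvg_dnbhs_at_right cg.
rewrite big_seq; rewrite -(cvg_lim _ cg') //.
apply: limr_ge; first exact: (cvgP _ cg').
near=> t.
have t0 : 0 < t by near: t; exact: nbhs_right_gt.
have t1 : t <= 1 by near: t; exact: nbhs_right_le.
rewrite -big_seq /g.
have -> : \sum_(k <- r) t^-1 *: ((f k \o shift xs) (t *: h) - f k xs)
   = t^-1 * (\sum_(k <- r) f k (xs + t *: h) - \sum_(k <- r) f k xs).
  rewrite -sumrB mulr_sumr; apply: eq_bigr => k _ /=.
  by rewrite [t *: h + xs]addrC.
apply: mulr_ge0; first by rewrite invr_ge0 ltW.
by rewrite subr_ge0; exact: hmin.
Unshelve. all: by end_near. Qed.

Lemma dbound (R : realType) (V : normedModType R) (f : V -> R) (z : V) :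
  differentiable f z -> exists M : R, forall v, `|'d f z v| <= M * `|v|.
Proof.
move=> df.
have cb : bounded_near ('d f z) (nbhs (0:V)).
  apply: continuous_linear_bounded.
  exact: (diff_continuous df).
have [M [_ HM]] := (proj1 (linear_boundedP ('d f z)) cb).
exists (M + 1); apply: HM; by rewrite ltrDl.
Qed.

Lemma dual_prop (R : realType) (V : normedModType R) (L : V -> R) (M : R) :
  (forall (c : R) v, L (c *: v) = c * L v) ->
  (forall v, `|L v| <= M * `|v|) ->
  0 <= dual_norm L /\ forall v, `|L v| <= dual_norm L * `|v|.
Proof.
move=> lin bnd.
have L0 : L 0 = 0 by rewrite -(scale0r (0:V)) lin mul0r.
set E := [set `|L v| | v in [set v : V | `|v| <= 1]].
have ub : has_ubound E.
  exists `|M| => _ [v /= v1 <-].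
  apply: (le_trans (bnd v)).
  apply: (le_trans (ler_norm _)); rewrite normrM.
  by rewrite -[leRHS]mulr1 ler_wpM2l // normr_id.
have E0 : E `|L 0| by exists 0 => //=; rewrite normr0.
have s0 : 0 <= dual_norm L.
  apply: le_trans (ub_le_sup ub E0); by rewrite L0 normr0.
split => // v.
have [->|v0] := eqVneq v 0; first by rewrite L0 !normr0 mulr0.
have nv : 0 < `|v| by rewrite normr_gt0.
have Eu : E `|L (`|v|^-1 *: v)|.
  exists (`|v|^-1 *: v) => //=.
  by rewrite normrZ normfV normr_id mulVf // gt_eqF.
have := ub_le_sup ub Eu.
rewrite lin normrM normfV normr_id -ler_pdivlMl ?invr_gt0 // invrK => H.
by rewrite mulrC.
Qed.

Lemma convX (R : realType) (V : normedModType R) (X : set V) (a b : V) (t : R) :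
  convex_set (X : set (convex_lmodType V)) -> X a -> X b -> 0 <= t -> t <= 1 ->
  X (a + t *: (b - a)).
Proof.
move=> cX Xa Xb t0 t1.
have := cX b a (Itv01 t0 t1) (mem_set Xb) (mem_set Xa).
rewrite inE.
have E : conv (Itv01 t0 t1) (b : convex_lmodType V) a = t *: b + (1 - t) *: a :> V := erefl.
rewrite E; congr X.
rewrite scalerBl scale1r scalerBr addrCA; congr (_ + _); by rewrite addrC.
Qed.



Theorem lemma2 (R : realType) (V : normedModType R) (X : set V)
  (F : V -> V -> R) (alpha beta G2 : R) (x : nat -> V) :
  convex_set (X : set (convex_lmodType V)) ->
  (forall z y, X z -> X y -> differentiable (F z) y) ->
  0 < alpha ->
  (forall x0 y z, X x0 -> X y -> X z ->
     F z y + 'd (F z) y (x0 - y) + alpha / 2 * `|x0 - y| ^+ 2 <= F z x0) ->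
  (forall x0 y z, X x0 -> X y -> X z ->
     `|F z x0 - F z y| <= G2 * `|x0 - y|) ->
  (forall x0 y z, X x0 -> X y -> X z ->
     dual_norm (fun v => 'd (F x0) z v - 'd (F y) z v) <= beta * `|x0 - y|) ->
  X (x 1%N) ->
  (forall n : nat, (1 <= n)%N ->
     X (x n.+1) /\
     forall y, X y -> \sum_(1 <= k < n.+1) F (x k) (x n.+1)
                      <= \sum_(1 <= k < n.+1) F (x k) y) ->
  forall n : nat, (2 <= n)%N ->
    `|x n.+1 - x n| <=
      (beta / alpha) * ((n.-1)%:R^-1 * \sum_(1 <= k < n) `|x n - x k|) / n%:R.
Proof.
move=> cX dF a0 sc _ gl X1 hit n n2.
have Xx : forall k, (0 < k)%N -> X (x k).
  case=> [//|[_|k _]]; first exact: X1.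
  exact: (hit k.+1 isT).1.
have mono : forall k a b, X (x k) -> X a -> X b ->
    alpha * `|a - b| ^+ 2 <= 'd (F (x k)) a (a - b) - 'd (F (x k)) b (a - b).
  move=> k a b Xk Xa Xb.
  have h1 := sc a b (x k) Xa Xb Xk.
  have h2 := sc b a (x k) Xb Xa Xk.
  rewrite distrC -[b - a]opprB linearN /= in h2.
  lra.
case: n n2 => [//|m]; rewrite ltnS => m1 /=.
have Xn : X (x m.+1) by apply: Xx.
have Xn1 : X (x m.+2) by apply: Xx.
set D := x m.+1 - x m.+2.
have opt1 : 0 <= \sum_(1 <= k < m.+2) 'd (F (x k)) (x m.+2) D.
  apply: opt_sum.
  - move=> k; rewrite mem_index_iota => /andP[k1 _]; apply: dF; [exact: Xx|exact: Xn1].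
  - move=> t t0 t1; exact: (proj2 (hit m.+1 isT)) _ (@convX _ _ _ _ _ _ cX Xn1 Xn (ltW t0) t1).
have opt2 : 0 <= \sum_(1 <= k < m.+1) 'd (F (x k)) (x m.+1) (x m.+2 - x m.+1).
  apply: opt_sum.
  - move=> k; rewrite mem_index_iota => /andP[k1 _]; apply: dF; [exact: Xx|exact: Xn].
  - move=> t t0 t1; exact: (proj2 (hit m m1)) _ (@convX _ _ _ _ _ _ cX Xn Xn1 (ltW t0) t1).
have opt2' : \sum_(1 <= k < m.+1) 'd (F (x k)) (x m.+1) D <= 0.
  move: opt2; rewrite -[x m.+2 - x m.+1]opprB.
  under eq_bigr do rewrite linearN.
  by rewrite sumrN oppr_ge0.
have msum : \sum_(1 <= k < m.+2) (alpha * `|D| ^+ 2) <=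
    \sum_(1 <= k < m.+2) ('d (F (x k)) (x m.+1) D - 'd (F (x k)) (x m.+2) D).
  rewrite big_seq_cond [X in _ <= X]big_seq_cond; apply: ler_sum => k.
  rewrite andbT mem_index_iota => /andP[k1 _]; apply: mono => //; exact: Xx.
rewrite sumr_const_nat sumrB big_nat_recr //= in msum.
set A := \sum_(1 <= k < m.+1) 'd (F (x k)) (x m.+1) D in msum opt2'.
set P := 'd (F (x m.+1)) (x m.+1) D in msum.
set Q := \sum_(1 <= k < m.+2) 'd (F (x k)) (x m.+2) D in msum opt1.
have Bb : forall k, (0 < k)%N ->
    0 <= beta * `|x m.+1 - x k| /\
    P - 'd (F (x k)) (x m.+1) D <= beta * `|x m.+1 - x k| * `|D|.
  move=> k k0.
  have [M1 HM1] := @dbound _ _ _ _ (dF _ _ Xn Xn).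
  have [M2 HM2] := @dbound _ _ _ _ (dF _ _ (Xx k k0) Xn).
  pose L := fun v => 'd (F (x m.+1)) (x m.+1) v - 'd (F (x k)) (x m.+1) v.
  have lin : forall (c : R) v, L (c *: v) = c * L v.
    by move=> c v; rewrite /L !linearZ /= -scalerDr.
  have bnd : forall v, `|L v| <= (M1 + M2) * `|v|.
    by move=> v; rewrite mulrDl; apply: le_trans (ler_normB _ _) _; apply: lerD.
  have [dn0 dnb] := @dual_prop _ _ L _ lin bnd.
  have g := gl _ _ _ Xn (Xx k k0) Xn.
  split; first exact: le_trans g.
  apply: le_trans (ler_norm _) _; apply: le_trans (dnb D) _.
  by apply: ler_wpM2r.
have Bsum : m%:R * P - A <= beta * (\sum_(1 <= k < m.+1) `|x m.+1 - x k|) * `|D|.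
  have -> : m%:R * P = \sum_(1 <= k < m.+1) P by rewrite sumr_const_nat subn1 /= mulr_natl.
  rewrite -sumrB mulr_sumr mulr_suml big_seq_cond [X in _ <= X]big_seq_cond.
  apply: ler_sum => k; rewrite andbT mem_index_iota => /andP[k1 _].
  exact: (Bb k k1).2.
have T0 : 0 <= beta * (\sum_(1 <= k < m.+1) `|x m.+1 - x k|).
  rewrite mulr_sumr big_seq_cond; apply: sumr_ge0 => k.
  rewrite andbT mem_index_iota => /andP[k1 _]; exact: (Bb k k1).1.
set T := \sum_(1 <= k < m.+1) `|x m.+1 - x k|  in Bsum T0 *.
rewrite distrC -/D.
have m0 : 0 < m%:R :> R by rewrite ltr0n.
have K : m%:R * (m.+1%:R * alpha * `|D| ^+ 2) <= beta * T * `|D|.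
  have : m%:R * (alpha * `|D| ^+ 2 *+ (m.+2 - 1)) <= m%:R * (A + P - Q).
    by apply: ler_wpM2l => //; apply: ltW.
  rewrite subn1 /= => h.
  have e : m.+1%:R * alpha * `|D| ^+ 2 = alpha * `|D| ^+ 2 *+ m.+1
    by rewrite -[RHS]mulr_natl mulrA.
  rewrite e; apply: le_trans h _.
  have mA : m%:R * A <= 0 by apply: mulr_ge0_le0 => //; apply: ltW.
  have mQ : 0 <= m%:R * Q by apply: mulr_ge0 => //; apply: ltW.
  rewrite !mulrDr mulrN; lra.
have a0' : alpha != 0 by rewrite gt_eqF.
have m0' : m%:R != 0 :> R by rewrite gt_eqF.
have m1' : m.+1%:R != 0 :> R by rewrite pnatr_eq0.
have -> : beta / alpha * (m%:R^-1 * T) / m.+1%:R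
    = (beta * T) / (alpha * m%:R * m.+1%:R).
  by field; rewrite a0' m0' addrC natr1 m1'.
have pd : 0 < alpha * m%:R * m.+1%:R by rewrite !mulr_gt0 // ltr0n.
have := normr_ge0 D; rewrite le_eqVlt => /orP[/eqP <-|dpos].
  by rewrite divr_ge0 // ltW.
rewrite ler_pdivlMr //.
have e : `|D| * (`|D| * (alpha * m%:R * m.+1%:R)) = m%:R * (m.+1%:R * alpha * `|D| ^+ 2)
  by ring.
rewrite -e [beta * T * _]mulrC in K.
by rewrite -(ler_pM2l dpos).
Qed.
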